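(* Let $p>1$ be an integer and let $\mathbf{l}=(l_1,\dots,l_q)\in\mathbb{N}^q$, $\mathbf{r}=(r_1,\dots,r_s)\in\mathbb{N}^s$ have all components greater than $1$. Let $n=p\,\Pi(\mathbf{l})\,\Pi(\mathbf{r})$ and $A\in\{0,1\}^{n\times n}$. Then $A$ admits both an $(l_1,\dots,l_q,\,p\Pi(\mathbf{r}))$ factorization and a $(p\Pi(\mathbf{l}),\,r_1,\dots,r_s)$ factorization if and only if $A$ admits an $(l_1,\dots,l_q,p,r_1,\dots,r_s)$ factorization.
   Context: For $\mathbf{n}=(n_1,\dots,n_d)$, $\Pi(\mathbf{n})=\prod_{i=1}^d n_i$. Kronecker products of binary matrices use Boolean arithmetic ($1+1=1$). For positive integers $n_1,\dots,n_m$ with $\prod n_i=n$, an $(n_1,\dots,n_m)$ factorization of $A\in\{0,1\}^{n\times n}$ is an expression $A=A_1\otimes\cdots\otimes A_m$ with $A_i\in\{0,1\}^{n_i\times n_i}$. *)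

(* Defs.v *)
From mathcomp Require Import all_boot all_algebra.
Set Implicit Arguments. Unset Strict Implicit. Unset Printing Implicit Defensive.

(* entry (a,b) of a square binary matrix, with indices given as naturals
   (false outside the index range; never used out of range below) *)
Definition mxe (m : nat) (M : 'M[bool]_m) (a b : nat) : bool :=
  match @insub _ (fun x => x < m) _ a, @insub _ (fun x => x < m) _ b with
  | Some a', Some b' => M a' b'
  | _, _ => false
  end.

(* Boolean Kronecker product A (x) B of A : m x m and B : k x k:
   (A (x) B)_{(i1 k + i2),(j1 k + j2)} = A_{i1 j1} * B_{i2 j2} *)
Definition bkron (m k : nat) (A : 'M[bool]_m) (B : 'M[bool]_k) : 'M[bool]_(m * k) :=
  \matrix_(i, j) (mxe A (i %/ k) (j %/ k) && mxe B (i %% k) (j %% k)).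

Definition bmx := {m : nat & 'M[bool]_m}.

Definition bkron_pack (X Y : bmx) : bmx :=
  existT _ (tag X * tag Y) (bkron (tagged X) (tagged Y)).

Definition bmx_one : bmx := existT _ 1 (const_mx true : 'M[bool]_1).

Definition bkron_seq (s : seq bmx) : bmx := foldr bkron_pack bmx_one s.

Definition factorization (n : nat) (A : 'M[bool]_n) (ns : seq nat) : Prop :=
  \prod_(x <- ns) x = n /\
  exists s : seq bmx,
    map tag s = ns /\ tag (bkron_seq s) = n /\
    forall i j : 'I_n, A i j = mxe (tagged (bkron_seq s)) i j.

(* Main.v *)
Require Import Defs.
From mathcomp Require Import all_boot all_algebra.
From Stdlib Require Import Classical_Prop.
Set Implicit Arguments. Unset Strict Implicit.

Lemma mxe_lt m (M : 'M[bool]_m) a b : mxe M a b -> (a < m) && (b < m).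
Proof.
rewrite /mxe; case: insubP => [a' Ha _|//]; case: insubP => [b' Hb _|//] _.
by rewrite Ha Hb.
Qed.

Lemma mxe_outl m (M : 'M[bool]_m) a b : m <= a -> mxe M a b = false.
Proof. by move=> H; apply/negbTE/negP=> /mxe_lt; rewrite ltnNge H. Qed.
Lemma mxe_outr m (M : 'M[bool]_m) a b : m <= b -> mxe M a b = false.
Proof. by move=> H; apply/negbTE/negP=> /mxe_lt; rewrite andbC ltnNge H. Qed.

Lemma mxe_ord m (M : 'M[bool]_m) (i j : 'I_m) : mxe M i j = M i j.
Proof. by rewrite /mxe !valK. Qed.

Lemma mxe_kron m k (X : 'M[bool]_m) (Y : 'M[bool]_k) a b :
  mxe (bkron X Y) a b = mxe X (a %/ k) (b %/ k) && mxe Y (a %% k) (b %% k).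
Proof.
have [k0|kp] := posnP k.
  subst k; rewrite (mxe_outl Y) ?andbF //.
  by rewrite (mxe_outl (bkron X Y)) // muln0.
have [Ha|Ha] := ltnP a (m * k); last first.
  by rewrite mxe_outl // mxe_outl // leq_divRL.
have [Hb|Hb] := ltnP b (m * k); last first.
  by rewrite mxe_outr // mxe_outr // leq_divRL.
rewrite -[a]/(nat_of_ord (Ordinal Ha)) -[b]/(nat_of_ord (Ordinal Hb)) mxe_ord mxE.
by [].
Qed.

Definition mk n (f : nat -> nat -> bool) : bmx :=
  existT (fun m => 'M[bool]_m) n (\matrix_(i, j) f (nat_of_ord i) (nat_of_ord j))%R.

Lemma mxe_mk n f a b : mxe (tagged (mk n f)) a b = [&& a < n, b < n & f a b].
Proof.
have [Ha|Ha] := ltnP a n; last by rewrite mxe_outl.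
have [Hb|Hb] := ltnP b n; last by rewrite mxe_outr.
rewrite -[a]/(nat_of_ord (Ordinal Ha)) -[b]/(nat_of_ord (Ordinal Hb)) mxe_ord mxE.
by [].
Qed.

Definition F s := mxe (tagged (bkron_seq s)).
Definition N s := tag (bkron_seq s).

Lemma N_prod s : N s = \prod_(y <- map tag s) y.
Proof. by elim: s => [|x s IH]; rewrite ?big_nil // big_cons -IH. Qed.

Lemma N_cat s1 s2 : N (s1 ++ s2) = N s1 * N s2.
Proof. by rewrite !N_prod map_cat big_cat. Qed.

Lemma F_cons x s a b : F (x :: s) a b =
  mxe (tagged x) (a %/ N s) (b %/ N s) && F s (a %% N s) (b %% N s).
Proof. exact: mxe_kron. Qed.

Lemma F_nil a b : F [::] a b = (a < 1) && (b < 1).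
Proof.
have [Ha|Ha] := ltnP a 1; last by rewrite /F mxe_outl.
have [Hb|Hb] := ltnP b 1; last by rewrite /F mxe_outr ?andbF.
rewrite /F -[a]/(nat_of_ord (Ordinal Ha)) -[b]/(nat_of_ord (Ordinal Hb)) mxe_ord mxE.
by [].
Qed.

Lemma F_single x a b : F [:: x] a b = mxe (tagged x) a b.
Proof. by rewrite F_cons /N /= !divn1 !modn1 F_nil andbT. Qed.

Lemma F_lt s a b : F s a b -> (a < N s) && (b < N s).
Proof. exact: mxe_lt. Qed.

Lemma F_cat s1 s2 a b : F (s1 ++ s2) a b =
  F s1 (a %/ N s2) (b %/ N s2) && F s2 (a %% N s2) (b %% N s2).
Proof.
elim: s1 a b => [|x s1 IH] a b /=.
  have [n0|np] := posnP (N s2).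
    have H0 u v : F s2 u v = false by apply/negP => /F_lt; rewrite n0.
    by rewrite !H0 andbF.
  have [Ha|Ha] := ltnP a (N s2); last first.
    rewrite F_nil ltn_divLR // mul1n ltnNge Ha /=.
    by apply/negbTE/negP=> /F_lt; rewrite ltnNge Ha.
  have [Hb|Hb] := ltnP b (N s2); last first.
    rewrite F_nil [b %/ _ < 1]ltn_divLR // mul1n [b < _]ltnNge Hb andbF /=.
    by apply/negbTE/negP=> /F_lt; rewrite andbC ltnNge Hb.
  by rewrite F_nil !divn_small // !modn_small.
rewrite -cat_cons !F_cons IH N_cat -!andbA; congr andb.
  by rewrite mulnC !divnMA.
rewrite -!modn_divl; congr andb.
by rewrite !modn_dvdm ?dvdn_mull.
Qed.

Lemma prod_gt0 r : all (fun x => 1 < x) r -> 0 < \prod_(x <- r) x.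
Proof.
elim: r => [|x r IH]; rewrite ?big_nil // big_cons /= => /andP[Hx Hr].
by rewrite muln_gt0 (ltnW Hx) IH.
Qed.

Lemma ext_A n (A : 'M[bool]_n) s : N s = n ->
  (forall i j : 'I_n, A i j = F s i j) <-> F s =2 mxe A.
Proof.
move=> HN; split=> H; last by move=> i j; rewrite -mxe_ord H.
move=> u v.
have [Hu|Hu] := ltnP u n; last first.
  rewrite mxe_outl //; apply/negbTE/negP => /F_lt; rewrite HN ltnNge Hu //.
have [Hv|Hv] := ltnP v n; last first.
  rewrite mxe_outr //; apply/negbTE/negP => /F_lt; rewrite HN andbC ltnNge Hv //.
by rewrite -[u]/(nat_of_ord (Ordinal Hu)) -[v]/(nat_of_ord (Ordinal Hv)) mxe_ord H.
Qed.

Lemma mkF s u v : mxe (tagged (mk (N s) (F s))) u v = F s u v.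
Proof.
rewrite mxe_mk; case E: (F s u v); last by rewrite !andbF.
by have /andP[-> ->] := F_lt E.
Qed.

Lemma N_single x : N [:: x] = tag x.
Proof. by rewrite /N /= muln1. Qed.

Lemma fwd p R t1 c d t2 : tag c = p * R -> N t2 = R -> 0 < p -> 0 < R ->
  F (t1 ++ [:: c]) =2 F (d :: t2) ->
  exists P : bmx, tag P = p /\ F (t1 ++ [:: c]) =2 F (t1 ++ P :: t2).
Proof.
move=> Hc Ht2 p0 R0 H.
have pR0 : 0 < p * R by rewrite muln_gt0 p0.
have E1 u v : F (t1 ++ [:: c]) u v =
   F t1 (u %/ (p * R)) (v %/ (p * R)) && mxe (tagged c) (u %% (p * R)) (v %% (p * R)).
  by rewrite F_cat N_single F_single -Hc.
case: (classic (exists a b, F t1 a b)) => [[a1 [b1 Hab]]|Hno]; last first.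
  exists (mk p (fun _ _ => false)); split => // u v.
  have Hf : forall a b, F t1 a b = false.
    by move=> a b; apply/negbTE/negP => Hab; apply: Hno; exists a, b.
  rewrite E1 F_cat !Hf. by [].
exists (mk p (fun x y => mxe (tagged d) (a1 * p + x) (b1 * p + y))); split => // u v.
have key u' v' : u' < p * R -> v' < p * R -> mxe (tagged c) u' v' =
   mxe (tagged d) (a1 * p + u' %/ R) (b1 * p + v' %/ R) && F t2 (u' %% R) (v' %% R).
  move=> Hu Hv.
  have := H (a1 * (p * R) + u') (b1 * (p * R) + v').
  rewrite E1 !divnMDl // !modnMDl (divn_small Hu) (divn_small Hv) (modn_small Hu) (modn_small Hv) !addn0 Hab /= => ->.
  by rewrite F_cons Ht2 !mulnA !divnMDl // !modnMDl.
have NP : forall f, N (mk p f :: t2) = p * R by move=> f; rewrite /N /= -/(N t2) Ht2.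
rewrite E1 F_cat F_cons NP Ht2.
rewrite key ?ltn_pmod // mxe_mk !ltn_divLR // !ltn_pmod // // !modn_dvdm ?dvdn_mull.
Qed.

Theorem corollary1 (p : nat) (l r : seq nat)
  (A : 'M[bool]_(p * \prod_(x <- l) x * \prod_(x <- r) x)) :
  1 < p -> 0 < size l -> 0 < size r ->
  all (fun x => 1 < x) l -> all (fun x => 1 < x) r ->
  (factorization A (l ++ [:: p * \prod_(x <- r) x]) /\
   factorization A (p * \prod_(x <- l) x :: r))
  <-> factorization A (l ++ p :: r).
Proof.
move=> p1 _ _ Hl Hr.
have p0 : 0 < p by apply: ltnW.
have R0 := prod_gt0 Hr.
move: A; set L := \prod_(x <- l) x; set R := \prod_(x <- r) x => A.
have Hprod : \prod_(x <- l ++ p :: r) x = p * L * R.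
  by rewrite big_cat big_cons /= -/L -/R mulnA [L * p]mulnC.
split.
- move=> [[_ [s1 [Hm1 [HN1 HA1]]]] [_ [s2 [Hm2 [HN2 HA2]]]]].
  move/(ext_A A HN1): HA1 => HA1; move/(ext_A A HN2): HA2 => HA2.
  have Es1 : s1 = take (size l) s1 ++ drop (size l) s1 by rewrite cat_take_drop.
  set t1 := take (size l) s1 in Es1.
  have Ht1 : map tag t1 = l by rewrite /t1 map_take Hm1 take_size_cat.
  have : map tag (drop (size l) s1) = [:: p * R] by rewrite map_drop Hm1 drop_size_cat.
  case: (drop (size l) s1) Es1 => [|c [|? ?]] //= Es1 [Hc].
  case: s2 Hm2 HN2 HA2 => [|d t2] //= [Hd Ht2] HN2 HA2.
  have NR : N t2 = R by rewrite N_prod Ht2.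
  have NL : N t1 = L by rewrite N_prod Ht1.
  have [P [HP HFP]] := @fwd p R t1 c d t2 Hc NR p0 R0
     (fun u v => etrans (etrans (congr1 (fun s => F s u v) (esym Es1)) (HA1 u v)) (esym (HA2 u v))).
  split; first exact: Hprod.
  exists (t1 ++ P :: t2); split; first by rewrite map_cat /= Ht1 Ht2 HP.
  have HN : N (t1 ++ P :: t2) = p * L * R.
    by rewrite N_cat /N /= -/(N t2) NR -/(N t1) NL HP mulnCA mulnA.
  split; first exact: HN.
  apply/(ext_A A HN) => u v; by rewrite -HFP -Es1 HA1.
- move=> [_ [s [Hm [HN HA]]]].
  move/(ext_A A HN): HA => HA.
  have Es : s = take (size l) s ++ drop (size l) s by rewrite cat_take_drop.
  set s1 := take (size l) s in Es.
  have Hs1 : map tag s1 = l by rewrite /s1 map_take Hm take_size_cat.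
  have : map tag (drop (size l) s) = p :: r by rewrite map_drop Hm drop_size_cat.
  case: (drop (size l) s) Es => [|x s2] //= Es [Hx Hs2].
  have NR : N s2 = R by rewrite N_prod Hs2.
  have NL : N s1 = L by rewrite N_prod Hs1.
  split.
  + split; first by rewrite big_cat big_seq1 /= -/L -/R mulnCA mulnA.
    exists (s1 ++ [:: mk (N (x :: s2)) (F (x :: s2))]).
    have NX : N (x :: s2) = p * R by rewrite /N /= -/(N s2) NR Hx.
    split; first by rewrite map_cat /= Hs1 NX.
    have HN' : N (s1 ++ [:: mk (N (x :: s2)) (F (x :: s2))]) = p * L * R.
      by rewrite N_cat N_single NL /= NX mulnCA mulnA.
    split; first exact: HN'.
    apply/(ext_A A HN') => u v.
    by rewrite -HA Es F_cat N_single F_single mkF [in RHS]F_cat.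
  + split; first by rewrite big_cons -/R.
    exists (mk (N (s1 ++ [:: x])) (F (s1 ++ [:: x])) :: s2).
    have NX : N (s1 ++ [:: x]) = p * L by rewrite N_cat N_single NL Hx mulnC.
    split; first by rewrite /= NX Hs2.
    have HN' : N (mk (N (s1 ++ [:: x])) (F (s1 ++ [:: x])) :: s2) = p * L * R.
      by rewrite /N /= -/(N s2) NR -/(N (s1 ++ [:: x])) NX.
    split; first exact: HN'.
    apply/(ext_A A HN') => u v.
    by rewrite -HA Es -[x :: s2]cat1s catA F_cat F_cons mkF.
Qed.
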